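(* Let $\mathbb W=(W,I,\preccurlyeq,\circ,{}^\sim,{}^-,{}^\neg)$ be a DqRA-frame. Then $(x^\sim)^\neg=(x^\neg)^-$ for all $x\in W$.
   Context: For a set $W$ and $\circ:W\times W\to\mathcal P(W)$, $U\circ V=\bigcup\{a\circ b\mid a\in U,b\in V\}$, $x\circ V=\{x\}\circ V$, $U\circ y=U\circ\{y\}$; superscripts compose left to right, e.g. $x^{\sim\neg}=(x^\sim)^\neg$. A DInFL-frame is a tuple $(W,I,\preccurlyeq,\circ,{}^\sim,{}^-)$ with $I\subseteq W$, $\preccurlyeq$ a partial order, $\circ:W\times W\to\mathcal P(W)$, ${}^\sim,{}^-:W\to W$, such that for all $u,v,x,y,z$: (F1) $x\preccurlyeq y$ iff $y\in I\circ x$ iff $y\in x\circ I$; (F2) $x\preccurlyeq y$, $x\in I$ imply $y\in I$; (F3) $x\preccurlyeq y$, $x\in u\circ v$ imply $y\in u\circ v$; (F4) $(x\circ y)\circ z=x\circ(y\circ z)$; (F5) $z^\sim\in x\circ y$ iff $y^-\in z\circ x$; (F6) $x^{\sim-}\preccurlyeq x$ and $x^{-\sim}\preccurlyeq x$. A DqRA-frame is a tuple $(W,I,\preccurlyeq,\circ,{}^\sim,{}^-,{}^\neg)$ such that $(W,I,\preccurlyeq,\circ,{}^\sim,{}^-)$ is a DInFL-frame and ${}^\neg:W\to W$ satisfies for all $x,y,z$: (F7) $x^{\neg\neg}=x$; (F8) $x\preccurlyeq y$ implies $y^\neg\preccurlyeq x^\neg$; (F9) $z^-\in x\circ y$ iff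 $z^\neg\in y^{\sim\neg}\circ x^{\sim\neg}$. *)

(* Defs.v *)
(* Sets of worlds are represented as predicates W -> Prop;
   the ternary relation  x ∘ y  : W -> W -> (W -> Prop). *)
Set Implicit Arguments.

Definition setcomp {W : Type} (c : W -> W -> W -> Prop) (U V : W -> Prop) : W -> Prop :=
  fun z => exists a b, U a /\ V b /\ c a b z.

Definition sing {W : Type} (x : W) : W -> Prop := fun y => y = x.

Record DInFL_frame (W : Type) (I : W -> Prop) (le : W -> W -> Prop)
    (c : W -> W -> W -> Prop) (tl mi : W -> W) : Prop := {
  po_refl : forall x, le x x;
  po_antisym : forall x y, le x y -> le y x -> x = y;
  po_trans : forall x y z, le x y -> le y z -> le x z;
  F1a : forall x y, le x y <-> setcomp c I (sing x) y;
  F1b : forall x y, le x y <-> setcomp c (sing x) I y;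
  F2 : forall x y, le x y -> I x -> I y;
  F3 : forall x y u v, le x y -> c u v x -> c u v y;
  F4 : forall x y z w,
      setcomp c (setcomp c (sing x) (sing y)) (sing z) w <->
      setcomp c (sing x) (setcomp c (sing y) (sing z)) w;
  F5 : forall x y z, c x y (tl z) <-> c z x (mi y);
  F6a : forall x, le (mi (tl x)) x;
  F6b : forall x, le (tl (mi x)) x
}.

Record DqRA_frame (W : Type) (I : W -> Prop) (le : W -> W -> Prop)
    (c : W -> W -> W -> Prop) (tl mi ng : W -> W) : Prop := {
  dq_base : DInFL_frame I le c tl mi;
  F7 : forall x, ng (ng x) = x;
  F8 : forall x y, le x y -> le (ng y) (ng x);
  F9 : forall x y z, c x y (mi z) <-> c (ng (tl y)) (ng (tl x)) (ng z)
}.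

(* Main.v *)
Require Import Defs.
From Stdlib Require Import Setoid.

Section S.
Variables (W : Type) (I : W -> Prop) (le : W -> W -> Prop)
    (c : W -> W -> W -> Prop) (tl mi ng : W -> W).
Hypothesis H : DqRA_frame I le c tl mi ng.

Let B := dq_base H.

Lemma leA x y : le x y <-> exists e, I e /\ c e x y.
Proof.
  rewrite (F1a B). unfold setcomp, sing. split.
  - intros (a & b & Ha & -> & Hc). eauto.
  - intros (e & He & Hc). eauto.
Qed.

Lemma leB x y : le x y <-> exists e, I e /\ c x e y.
Proof.
  rewrite (F1b B). unfold setcomp, sing. split.
  - intros (a & b & -> & Hb & Hc). eauto.
  - intros (e & He & Hc). eauto.
Qed.

Lemma gal y z : le y (tl z) <-> le z (mi y).
Proof.
  rewrite leA, leB. split; intros (e & He & Hc); exists e; split; auto;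
  apply (F5 B); auto.
Qed.

Lemma mitl z : mi (tl z) = z.
Proof.
  apply (po_antisym B). apply (F6a B). apply gal, (po_refl B).
Qed.

Lemma tlmi y : tl (mi y) = y.
Proof.
  apply (po_antisym B). apply (F6b B). apply gal, (po_refl B).
Qed.

Lemma mi_anti p q : le p q <-> le (mi q) (mi p).
Proof.
  pose proof (gal p (mi q)) as G. rewrite tlmi in G. exact G.
Qed.

Lemma ng_anti p q : le p q <-> le (ng q) (ng p).
Proof.
  split. apply (F8 H). intro Hl. apply (F8 H) in Hl. rewrite !(F7 H) in Hl. exact Hl.
Qed.

Lemma leE b q : le b q <-> exists e, I e /\ c b (ng (tl e)) q.
Proof.
  rewrite ng_anti, mi_anti, leA. split; intros (e & He & Hc); exists e; split; auto.
  - apply (F9 H) in Hc. rewrite tlmi, !(F7 H) in Hc. exact Hc.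
  - apply (F9 H). rewrite tlmi, !(F7 H). exact Hc.
Qed.

Lemma leC a y : le a (mi y) <-> exists e, I e /\ c a y (tl e).
Proof.
  rewrite leA. split; intros (e & He & Hc); exists e; split; auto; apply (F5 B); auto.
Qed.

Lemma L b a : le (ng (tl b)) (mi (ng (tl a))) <-> le b (tl a).
Proof.
  rewrite leC, leE. split; intros (e & He & Hc); exists e; split; auto.
  - pose proof (proj2 (F9 H a b (ng (tl e)))) as K. rewrite (F7 H) in K.
    apply K in Hc. apply (F5 B) in Hc. exact Hc.
  - pose proof (proj1 (F9 H a b (ng (tl e)))) as K. rewrite (F7 H) in K.
    apply K. apply (F5 B). exact Hc.
Qed.

Lemma tl_anti p q : le p q -> le (tl q) (tl p).
Proof. intro h. apply mi_anti. rewrite !mitl. exact h. Qed.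

Lemma T_mono p q : le p q -> le (ng (tl p)) (ng (tl q)).
Proof. intro h. apply ng_anti. rewrite !(F7 H). apply tl_anti. exact h. Qed.

Lemma R1 b : le (ng (tl (ng (tl b)))) b.
Proof.
  assert (h : le (ng (tl b)) (mi (ng b))).
  { pose proof (proj2 (L b (mi b))) as K. rewrite tlmi in K. apply K, (po_refl B). }
  apply T_mono in h. rewrite tlmi, (F7 H) in h. exact h.
Qed.

Lemma R2 b : le b (ng (tl (ng (tl b)))).
Proof.
  set (a := mi (ng (tl (ng (tl b))))).
  assert (h : le b (tl a)).
  { apply L. unfold a. rewrite tlmi, (F7 H), mitl. apply (po_refl B). }
  apply gal in h. unfold a in h. apply mi_anti in h. exact h.
Qed.
End S.

Theorem mainTheorem8 (W : Type) (I : W -> Prop) (le : W -> W -> Prop)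
    (c : W -> W -> W -> Prop) (tl mi ng : W -> W)
    (H : DqRA_frame I le c tl mi ng) :
  forall x : W, ng (tl x) = mi (ng x).
Proof.
  intro x.
  assert (E : ng (tl (ng (tl x))) = x).
  { apply (po_antisym (dq_base H)). apply (@R1 W I le c tl mi ng H). apply (@R2 W I le c tl mi ng H). }
  rewrite <- E at 2. rewrite (F7 H), (@mitl W I le c tl mi ng H). reflexivity.
Qed.
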